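(* Let $k\ge2$, $\alpha_1,\dots,\alpha_k\in[0,2\pi)$ and let $n_1,\dots,n_k$ be positive integers with $n_i\ne n_{i+1}$ for every $i\in\{1,\dots,k-1\}$. Then there exists $\phi\in[0,2\pi)$ such that $$V\big(\cos(\alpha_1+\phi n_1),\dots,\cos(\alpha_k+\phi n_k)\big)\ \ge\ \frac{k-1}{8}.$$
   Context: For real numbers $r_1,\dots,r_k$, $V(r_1,\dots,r_k):=|\{i\in\{1,\dots,k-1\}:r_ir_{i+1}<0\}|$ is the number of sign variations. *)

(* Defs.v *)
From Stdlib Require Import Reals List.
Import ListNotations.
Open Scope R_scope.

Fixpoint sign_var (l : list R) : nat :=
  match l with
  | x :: ((y :: _) as t) =>
      ((if Rlt_dec (x * y) 0 then 1 else 0) + sign_var t)%nat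
  | _ => 0%nat
  end.

(* Main.v *)
Require Import Defs.
From Stdlib Require Import Reals List Lra Lia Classical ZArith.
Import ListNotations.
Open Scope R_scope.

Fixpoint rsum (f : nat -> R) (N : nat) : R :=
  match N with O => 0 | S N => rsum f N + f N end.

Lemma rsum_ext f g N : (forall i, (i < N)%nat -> f i = g i) -> rsum f N = rsum g N.
Proof. induction N; simpl; intros H; auto. rewrite IHN by (intros; apply H; lia). rewrite H by lia; auto. Qed.

Lemma rsum_le f g N : (forall i, (i < N)%nat -> f i <= g i) -> rsum f N <= rsum g N.
Proof. induction N; simpl; intros H; [lra|]. assert (H1 := H N ltac:(lia)). assert (rsum f N <= rsum g N) by (apply IHN; intros; apply H; lia). lra. Qed.

Lemma rsum_plus f g N : rsum (fun i => f i + g i) N = rsum f N + rsum g N.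
Proof. induction N; simpl; lra. Qed.

Lemma rsum_scal c f N : rsum (fun i => c * f i) N = c * rsum f N.
Proof. induction N; simpl; [lra|]. rewrite IHN; lra. Qed.

Lemma rsum_const c N : rsum (fun _ => c) N = INR N * c.
Proof. induction N; [simpl; lra|]. rewrite S_INR. change (rsum (fun _ => c) N + c = (INR N + 1) * c). rewrite IHN; lra. Qed.

Lemma rsum_swap (f : nat -> nat -> R) N M :
  rsum (fun i => rsum (fun j => f i j) M) N = rsum (fun j => rsum (fun i => f i j) N) M.
Proof. induction N; simpl. - induction M; simpl; lra.
 - rewrite IHN. rewrite <- rsum_plus. reflexivity. Qed.

Lemma rsum_shift1 f N : rsum f (S N) = f O + rsum (fun i => f (S i)) N.
Proof. induction N; simpl in *; [lra|]. rewrite IHN; lra. Qed.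

Lemma rsum_period (G : nat -> R) L : (forall j, G (j + L)%nat = G j) ->
  forall c, rsum (fun j => G (j + c)%nat) L = rsum G L.
Proof. intros HG c. induction c.
 - apply rsum_ext; intros; rewrite Nat.add_0_r; auto.
 - rewrite <- IHc. pose (f := fun j => G (j + c)%nat).
   assert (E1 := rsum_shift1 f L).
   change (rsum f (S L)) with (rsum f L + f L) in E1.
   assert (E2 : f L = f O) by (unfold f; rewrite Nat.add_comm, HG; reflexivity).
   transitivity (rsum (fun i => f (S i)) L).
   + apply rsum_ext; intros; unfold f; f_equal; lia.
   + change (rsum (fun i => f (S i)) L = rsum f L). lra. Qed.

Lemma rsum_telesc (F : nat -> R) N : rsum (fun r => F (S r) - F r) N = F N - F O.
Proof. induction N; simpl; [lra|]. rewrite IHN; lra. Qed.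

Lemma rsum_exists f L a : (0 < L)%nat -> rsum f L >= INR L * a -> exists j, (j < L)%nat /\ f j >= a.
Proof. intros HL Hs. apply NNPP; intro C.
 assert (H : forall j, (j < L)%nat -> f j < a).
 { intros j Hj. apply Rnot_ge_lt. intro; apply C; eauto. }
 clear C. destruct L; [lia|].
 assert (forall N, (N <= S L)%nat -> (0<N)%nat -> rsum f N < INR N * a).
 { induction N; intros; [lia|]. rewrite S_INR. change (rsum f N + f N < (INR N + 1) * a). destruct N.
   simpl. assert (f 0%nat < a) by (apply H; lia). lra.
   assert (rsum f (S N) < INR (S N) * a) by (apply IHN; lia).
   assert (f (S N) < a) by (apply H; lia). lra. }
 specialize (H0 (S L) (le_n _) ltac:(lia)). lra.
Qed.

Definition ind (x : R) : R := if Rlt_dec x 0 then 1 else 0.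

Lemma sin_half_nz (m t : nat) : (0<m)%nat -> ~ Nat.divide m t -> sin (PI * INR t / INR m) <> 0.
Proof. intros Hm Hd E. apply sin_eq_0_0 in E. destruct E as [z Hz].
 assert (Hm' : INR m <> 0) by (apply not_0_INR; lia).
 assert (INR t = IZR z * INR m).
 { assert (E2 : PI * INR t = IZR z * PI * INR m) by (rewrite <- Hz; field; auto).
   apply (Rmult_eq_reg_l PI); [|apply PI_neq0]. lra. }
 rewrite !INR_IZR_INZ, <- mult_IZR in H. apply eq_IZR in H.
 apply Hd. exists (Z.to_nat z). apply Nat2Z.inj. rewrite Nat2Z.inj_mul.
 rewrite Z2Nat.id; [lia|]. nia. Qed.

Lemma cos_sum_zero (th : R) (m t : nat) : (0<m)%nat -> ~ Nat.divide m t ->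
  rsum (fun r => cos (th + INR r * (2*PI*INR t/INR m))) m = 0.
Proof. intros Hm Hd. set (d := 2*PI*INR t/INR m).
 assert (Hm' : INR m <> 0) by (apply not_0_INR; lia).
 pose (F := fun r => sin (th + INR r * d - d/2)).
 assert (E : rsum (fun r => 2 * sin (d/2) * cos (th + INR r * d)) m = F m - F O).
 { rewrite <- rsum_telesc. apply rsum_ext. intros i _. unfold F; cbv beta.
   rewrite S_INR. replace (th + (INR i + 1) * d - d/2) with ((th + INR i * d) + d/2) by lra.
   rewrite sin_plus, sin_minus. field. }
 assert (F m = F O).
 { unfold F. simpl INR at 2. replace (th + INR m * d - d/2) with ((th + 0 * d - d/2) + 2 * INR t * PI).
   apply sin_period. unfold d. field. auto. }
 rewrite rsum_scal in E.
 assert (sin (d/2) <> 0). { replace (d/2) with (PI * INR t / INR m) by (unfold d; field; auto). apply sin_half_nz; auto. }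
 assert (2 * sin (d / 2) <> 0) by lra.
 apply (Rmult_eq_reg_l (2 * sin (d/2))); auto. lra. Qed.

Lemma ind_ge (c : R) : -1 <= c <= 1 -> ind c >= (c*c - c)/2.
Proof. intros H. unfold ind. destruct (Rlt_dec c 0); nra. Qed.

Lemma ind_01 c : 0 <= ind c <= 1.
Proof. unfold ind. destruct (Rlt_dec c 0); lra. Qed.

Lemma ind_opp c : c <> 0 -> ind c + ind (-c) = 1.
Proof. intros. unfold ind. destruct (Rlt_dec c 0); destruct (Rlt_dec (-c) 0); lra. Qed.

Lemma count_A (th : R) (m n : nat) : (0<m)%nat -> ~ Nat.divide m n -> ~ Nat.divide m (2*n) ->
  rsum (fun r => ind (cos (th + INR r * (2*PI*INR n/INR m)))) m >= INR m / 4.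
Proof. intros Hm H1 H2.
 assert (Hm' : INR m <> 0) by (apply not_0_INR; lia).
 assert (E1 := cos_sum_zero th m n Hm H1).
 assert (E2 := cos_sum_zero (2*th) m (2*n) Hm H2).
 assert (L : rsum (fun r => 1/4 + (/4 * cos (2*th + INR r * (2*PI*INR (2*n)/INR m)) + (-1/2) * cos (th + INR r * (2*PI*INR n/INR m)))) m
   <= rsum (fun r => ind (cos (th + INR r * (2*PI*INR n/INR m)))) m).
 { apply rsum_le. intros r _. set (x := th + INR r * (2*PI*INR n/INR m)).
   replace (2*th + INR r * (2*PI*INR (2*n)/INR m)) with (2 * x).
   2:{ unfold x. rewrite mult_INR. simpl (INR 2). field. auto. }
   rewrite cos_2a_cos. assert (H := ind_ge (cos x) (COS_bound x)). lra. }
 rewrite !rsum_plus, !rsum_scal, rsum_const, E1, E2 in L. lra. Qed.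

Lemma cos_alt th r : cos (th + INR (S r) * PI) = - cos (th + INR r * PI).
Proof. rewrite S_INR. replace (th + (INR r + 1) * PI) with ((th + INR r * PI) + PI) by lra. apply neg_cos. Qed.

Lemma cos_alt_nz th r : cos th <> 0 -> cos (th + INR r * PI) <> 0.
Proof. intros H. induction r. simpl. rewrite Rmult_0_l, Rplus_0_r; auto.
 rewrite cos_alt. intro E. apply IHr. lra. Qed.

Lemma count_alt th : cos th <> 0 -> forall m,
  2 * rsum (fun r => ind (cos (th + INR r * PI))) m >= INR m - 1 /\
  2 * rsum (fun r => ind (cos (th + INR r * PI))) (S m) >= INR m.
Proof. intros H m. induction m.
 - simpl. assert (X := ind_01 (cos (th + 0 * PI))). lra.
 - destruct IHm as [A B]. split. rewrite S_INR. lra.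
   change (rsum (fun r => ind (cos (th + INR r * PI))) (S (S m))) with
     (rsum (fun r => ind (cos (th + INR r * PI))) m + ind (cos (th + INR m * PI)) + ind (cos (th + INR (S m) * PI))).
   rewrite cos_alt. assert (X := ind_opp (cos (th + INR m * PI)) (cos_alt_nz th m H)).
   rewrite S_INR. lra. Qed.

Lemma count_B (th : R) (m n : nat) : (0<m)%nat -> ~ Nat.divide m n -> Nat.divide m (2*n) -> cos th <> 0 ->
  rsum (fun r => ind (cos (th + INR r * (2*PI*INR n/INR m)))) m >= INR m / 4.
Proof. intros Hm H1 [q Hq] Hc.
 assert (Hm' : INR m <> 0) by (apply not_0_INR; lia).
 destruct (Nat.Even_or_Odd q) as [[p Hp]|[p Hp]].
 - exfalso. apply H1. exists p. lia.
 - assert (Hm2 : (2 <= m)%nat). { destruct m as [|[|]]; [lia| |lia]. exfalso; apply H1. exists n; lia. }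
   assert (Eq : INR n = (2 * INR p + 1) * INR m / 2).
   { apply (f_equal INR) in Hq. rewrite !mult_INR in Hq. subst q. rewrite plus_INR, mult_INR in Hq. simpl in Hq. lra. }
   rewrite (rsum_ext _ (fun r => ind (cos (th + INR r * PI)))).
   + destruct (count_alt th Hc m) as [A _]. apply le_INR in Hm2. simpl in Hm2. lra.
   + intros r _. f_equal. rewrite <- (cos_period (th + INR r * PI) (p * r)). f_equal.
     rewrite Eq, mult_INR. field. auto. Qed.

Lemma count_all (th : R) (m n : nat) : (0<m)%nat -> ~ Nat.divide m n ->
  (forall r, (r < m)%nat -> cos (th + INR r * (2*PI*INR n/INR m)) <> 0) ->
  rsum (fun r => ind (cos (th + INR r * (2*PI*INR n/INR m)))) m >= INR m / 4.
Proof. intros Hm H1 Hz. destruct (classic (Nat.divide m (2*n))).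
 - apply count_B; auto. specialize (Hz O Hm). simpl INR in Hz. rewrite Rmult_0_l, Rplus_0_r in Hz. auto.
 - apply count_A; auto. Qed.

Definition xg (p0 : R) (L j : nat) : R := p0 + 2*PI*INR j / INR L.

Lemma ind_pos y C : 0 < C -> ind (y * C) = ind y.
Proof. intros. unfold ind. destruct (Rlt_dec (y*C) 0); destruct (Rlt_dec y 0); auto; exfalso; nra. Qed.
Lemma ind_neg y C : C < 0 -> ind (y * C) = ind (- y).
Proof. intros. unfold ind. destruct (Rlt_dec (y*C) 0); destruct (Rlt_dec (-y) 0); auto; exfalso; nra. Qed.

Lemma inner (th C : R) (m n : nat) : (0<m)%nat -> ~ Nat.divide m n -> C <> 0 ->
  (forall r, (r < m)%nat -> cos (th + INR r * (2*PI*INR n/INR m)) <> 0) ->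
  rsum (fun r => ind (cos (th + INR r * (2*PI*INR n/INR m)) * C)) m >= INR m / 4.
Proof. intros Hm Hd HC Hz. destruct (Rlt_or_le 0 C) as [Hp|Hn].
 - rewrite (rsum_ext _ (fun r => ind (cos (th + INR r * (2*PI*INR n/INR m))))).
   + apply count_all; auto.
   + intros; apply ind_pos; auto.
 - assert (Hn' : C < 0) by lra.
   rewrite (rsum_ext _ (fun r => ind (cos ((th + PI) + INR r * (2*PI*INR n/INR m))))).
   + apply count_all; auto. intros r Hr. replace (th + PI + INR r * (2 * PI * INR n / INR m)) with
       ((th + INR r * (2 * PI * INR n / INR m)) + PI) by lra. rewrite neg_cos. intro E. apply (Hz r Hr). lra.
   + intros r _. rewrite ind_neg by auto. f_equal.  replace (th + PI + INR r * (2 * PI * INR n / INR m)) with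
       ((th + INR r * (2 * PI * INR n / INR m)) + PI) by lra. rewrite neg_cos. auto. Qed.

Lemma cos_per' a y (n : nat) : cos (a + (y + 2*PI) * INR n) = cos (a + y * INR n).
Proof. rewrite <- (cos_period (a + y * INR n) n). f_equal. lra. Qed.

Lemma xg_L p0 L j : (0 < L)%nat -> xg p0 L (j + L) = xg p0 L j + 2*PI.
Proof. intros. unfold xg. rewrite plus_INR. field. apply not_0_INR; lia. Qed.

Lemma pair_bound (a b p0 : R) (n m L : nat) : (0<L)%nat -> (0<m)%nat -> Nat.divide m L -> ~ Nat.divide m n ->
  (forall j, cos (b + xg p0 L j * INR m) <> 0) -> (forall j, cos (a + xg p0 L j * INR n) <> 0) ->
  rsum (fun j => ind (cos (a + xg p0 L j * INR n) * cos (b + xg p0 L j * INR m))) L >= INR L / 4.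
Proof. intros HL Hm [h Hh] Hd Zb Za.
 set (G := fun j => ind (cos (a + xg p0 L j * INR n) * cos (b + xg p0 L j * INR m))).
 assert (Hm' : INR m <> 0) by (apply not_0_INR; lia).
 assert (HL' : INR L <> 0) by (apply not_0_INR; lia).
 assert (Hper : forall j, G (j + L)%nat = G j).
 { intros j. unfold G. rewrite xg_L by auto. rewrite !cos_per'. auto. }
 assert (Hx : forall j r, xg p0 L (j + r*h) = xg p0 L j + INR r * (2*PI/INR m)).
 { intros j r. unfold xg. rewrite plus_INR, mult_INR. subst L. rewrite mult_INR in *. field.
   split; auto. intro E; apply HL'; rewrite E; ring. }
 assert (S1 : rsum (fun r => rsum (fun j => G (j + r*h)%nat) L) m = INR m * rsum G L).
 { rewrite <- rsum_const. apply rsum_ext. intros. apply rsum_period; auto. }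
 rewrite rsum_swap in S1.
 assert (S2 : rsum (fun j => INR m / 4) L <= rsum (fun j => rsum (fun r => G (j + r * h)%nat) m) L).
 { apply rsum_le. intros j _. unfold G.
   rewrite (rsum_ext _ (fun r => ind (cos ((a + xg p0 L j * INR n) + INR r * (2*PI*INR n/INR m)) * cos (b + xg p0 L j * INR m)))).
   - apply Rge_le, inner; auto.
     intros r _. specialize (Za (j + r*h)%nat). rewrite Hx in Za.
     replace (a + xg p0 L j * INR n + INR r * (2 * PI * INR n / INR m)) with
       (a + (xg p0 L j + INR r * (2 * PI / INR m)) * INR n) by (field; auto). auto.
   - intros r _. rewrite Hx. f_equal. f_equal.
     + f_equal. field. auto.
     + rewrite <- (cos_period (b + xg p0 L j * INR m) r). f_equal. field. auto. }
 rewrite rsum_const, S1 in S2.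
 assert (0 < INR m) by (apply lt_0_INR; lia). nra. Qed.

Definition refinable (Q : R -> Prop) := forall u v, u < v -> exists u' v',
  u <= u' /\ u' < v' /\ v' <= v /\ forall y, u' < y < v' -> Q y.

Lemma refin_ext (Q1 Q2 : R -> Prop) : (forall y, Q1 y -> Q2 y) -> refinable Q1 -> refinable Q2.
Proof. intros H R1 u v Huv. destruct (R1 u v Huv) as (u'&v'&A&B&C&D). exists u', v'; repeat split; auto. Qed.

Lemma refin_forall (Q : nat -> R -> Prop) K : (forall i, (i < K)%nat -> refinable (Q i)) ->
  refinable (fun y => forall i, (i < K)%nat -> Q i y).
Proof. induction K; intros H u v Huv.
 - exists u, v. repeat split; try lra. intros; lia.
 - destruct (IHK (fun i Hi => H i ltac:(lia)) u v Huv) as (u1&v1&A1&B1&C1&D1).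
   destruct (H K ltac:(lia) u1 v1 B1) as (u2&v2&A2&B2&C2&D2).
   exists u2, v2. repeat split; try lra. intros y Hy i Hi.
   destruct (Nat.eq_dec i K). subst; apply D2; auto. apply D1; [lra| lia]. Qed.

Lemma refin_cos b c : 0 < c -> refinable (fun y => cos (b + y * c) <> 0).
Proof. intros Hc u v Huv. set (A := b + u * c). set (B := b + v * c).
 assert (HAB : A < B) by (unfold A, B; nra).
 set (z := up ((A - PI/2)/PI)). destruct (archimed ((A - PI/2)/PI)) as [Z1 Z2]. fold z in Z1, Z2.
 assert (HPI := PI_RGT_0).
 set (w := PI/2 + IZR z * PI).
 assert (Hw1 : A < w). { unfold w. assert (IZR z * PI > (A - PI/2)/PI * PI) by nra.
   replace ((A - PI / 2) / PI * PI) with (A - PI/2) in H by (field; lra). lra. }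
 assert (Hw2 : w - PI <= A). { unfold w. assert ((IZR z - (A - PI / 2) / PI) * PI <= PI) by nra.
   replace ((IZR z - (A - PI / 2) / PI) * PI) with (IZR z * PI - (A - PI/2)) in H by (field; lra). lra. }
 set (T := Rmin B w).
 assert (HT1 : A < T) by (unfold T; apply Rmin_glb_lt; auto).
 assert (HT2 : T <= B) by apply Rmin_l.
 assert (HT3 : T <= w) by apply Rmin_r.
 exists u, ((T - b)/c). repeat split.
 - lra.
 - apply (Rmult_lt_reg_r c); auto. replace ((T - b)/c * c) with (T - b) by (field; lra). unfold A in HT1. lra.
 - apply (Rmult_le_reg_r c); auto. replace ((T - b)/c * c) with (T - b) by (field; lra). unfold B in HT2. lra.
 - intros y [Hy1 Hy2] E. apply cos_eq_0_0 in E. destruct E as [k Hk].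
   assert (Y1 : A < b + y * c) by (unfold A; nra).
   assert (Y2 : b + y * c < T).
   { assert (y * c < (T - b)/c * c) by nra. replace ((T - b)/c * c) with (T - b) in H by (field; lra). lra. }
   assert (K1 : IZR k < IZR z). { apply (Rmult_lt_reg_r PI); auto. unfold w in HT3. lra. }
   assert (K2 : IZR z - 1 < IZR k). { apply (Rmult_lt_reg_r PI); auto. unfold w in Hw2. lra. }
   apply lt_IZR in K1. rewrite <- minus_IZR in K2. apply lt_IZR in K2. lia. Qed.

Fixpoint prodn (n : nat -> nat) (t : nat) : nat :=
  match t with O => 1%nat | S t => (prodn n t * n (S t))%nat end.

Lemma prodn_pos n t : (forall i, (1 <= i <= t)%nat -> (0 < n i)%nat) -> (0 < prodn n t)%nat.
Proof. induction t; simpl; intros H; [lia|]. assert (0 < prodn n t)%nat by (apply IHt; intros; apply H; lia).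
 assert (0 < n (S t))%nat by (apply H; lia). nia. Qed.

Lemma prodn_div n t i : (1 <= i <= t)%nat -> Nat.divide (n i) (prodn n t).
Proof. induction t; intros H; [lia|]. simpl. destruct (Nat.eq_dec i (S t)).
 - subst. apply Nat.divide_mul_r, Nat.divide_refl.
 - apply Nat.divide_mul_l. apply IHt; lia. Qed.

Lemma sign_var_sum (g : nat -> R) t : forall s,
  INR (sign_var (map g (seq s (S t)))) = rsum (fun i => ind (g (s + i)%nat * g (s + i + 1)%nat)) t.
Proof. induction t; intros s. reflexivity.
 change (seq s (S (S t))) with (s :: seq (S s) (S t)).
 change (map g (s :: seq (S s) (S t))) with (g s :: map g (seq (S s) (S t))).
 change (seq (S s) (S t)) with (S s :: seq (S (S s)) t).
 change (map g (S s :: seq (S (S s)) t)) with (g (S s) :: map g (seq (S (S s)) t)).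
 change (sign_var (g s :: g (S s) :: map g (seq (S (S s)) t))) with
   ((if Rlt_dec (g s * g (S s)) 0 then 1 else 0) + sign_var (g (S s) :: map g (seq (S (S s)) t)))%nat.
 rewrite plus_INR. change (g (S s) :: map g (seq (S (S s)) t)) with (map g (seq (S s) (S t))).
 rewrite IHt, rsum_shift1. f_equal.
 - unfold ind. replace (s + 0)%nat with s by lia. replace (s + 1)%nat with (S s) by lia.
   destruct (Rlt_dec (g s * g (S s)) 0); reflexivity.
 - apply rsum_ext. intros i _. do 2 f_equal; f_equal; lia. Qed.

Theorem lemma5p5 (k : nat) (alpha : nat -> R) (n : nat -> nat)
  (hk : (2 <= k)%nat)
  (halpha : forall i, (1 <= i <= k)%nat -> 0 <= alpha i < 2 * PI)
  (hn : forall i, (1 <= i <= k)%nat -> (0 < n i)%nat)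
  (hneq : forall i, (1 <= i <= k - 1)%nat -> n i <> n (S i)) :
  exists phi : R, 0 <= phi < 2 * PI /\
    INR (sign_var (map (fun i => cos (alpha i + phi * INR (n i))) (seq 1 k)))
      >= (INR k - 1) / 8.
Proof.
  set (L := prodn n k).
  assert (HL : (0 < L)%nat) by (apply prodn_pos; auto).
  assert (HL' : 0 < INR L) by (apply lt_0_INR; auto).
  assert (HPI := PI_RGT_0).
  assert (Ref : refinable (fun y => forall i, (i < S k)%nat -> (1 <= i <= k)%nat ->
      forall j, (j < L)%nat -> cos (alpha i + xg y L j * INR (n i)) <> 0)).
  { apply refin_forall. intros i Hi.
    destruct (le_lt_dec 1 i) as [H1|H1].
    - apply (refin_ext (fun y => forall j, (j < L)%nat ->
         cos ((alpha i + 2*PI*INR j/INR L * INR (n i)) + y * INR (n i)) <> 0)).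
      + intros y H _ j Hj. unfold xg. replace (alpha i + (y + 2 * PI * INR j / INR L) * INR (n i)) with
          (alpha i + 2 * PI * INR j / INR L * INR (n i) + y * INR (n i)) by lra. auto.
      + apply refin_forall. intros j _. apply refin_cos. apply lt_0_INR, hn. lia.
    - intros u v Huv. exists u, v. repeat split; try lra. intros; lia. }
  destruct (Ref 0 (2*PI/INR L) ltac:(apply Rdiv_lt_0_compat; lra)) as (u'&v'&A1&A2&A3&A4).
  set (p0 := (u' + v')/2).
  assert (Gen0 := A4 p0 ltac:(unfold p0; lra)).
  assert (Gen : forall i, (1 <= i <= k)%nat -> forall j, cos (alpha i + xg p0 L j * INR (n i)) <> 0).
  { intros i Hi j. induction j as [j IH] using (well_founded_induction lt_wf).
    destruct (lt_dec j L). apply Gen0; auto; lia.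
    replace j with ((j - L) + L)%nat by lia. rewrite xg_L by auto. rewrite cos_per'. apply IH. lia. }
  set (F := fun i j => ind (cos (alpha (S i) + xg p0 L j * INR (n (S i))) *
                            cos (alpha (S (S i)) + xg p0 L j * INR (n (S (S i)))))).
  assert (Pair : forall i, (i < k - 1)%nat -> rsum (fun j => F i j) L >= INR L / 4).
  { intros i Hi. unfold F.
    assert (Hne := hneq (S i) ltac:(lia)).
    assert (D1 := prodn_div n k (S i) ltac:(lia)).
    assert (D2 := prodn_div n k (S (S i)) ltac:(lia)).
    destruct (classic (Nat.divide (n (S (S i))) (n (S i)))) as [Hd|Hd].
    - assert (Hd2 : ~ Nat.divide (n (S i)) (n (S (S i)))).
      { intro E. apply Hne. apply Nat.divide_antisym; auto. }
      rewrite (rsum_ext _ (fun j => ind (cos (alpha (S (S i)) + xg p0 L j * INR (n (S (S i)))) *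
                            cos (alpha (S i) + xg p0 L j * INR (n (S i)))))).
      + apply pair_bound; auto. apply hn; lia. apply Gen; lia. apply Gen; lia.
      + intros; rewrite Rmult_comm; auto.
    - apply pair_bound; auto. apply hn; lia. apply Gen; lia. apply Gen; lia. }
  assert (Tot : rsum (fun j => rsum (fun i => F i j) (k - 1)) L >= INR L * (INR (k - 1) / 4)).
  { rewrite <- rsum_swap. apply Rle_ge.
    apply Rle_trans with (rsum (fun _ => INR L / 4) (k - 1)).
    - rewrite rsum_const. lra.
    - apply rsum_le. intros i Hi. apply Rge_le, Pair; auto. }
  destruct (rsum_exists _ _ _ HL Tot) as (j & Hj & Hf).
  exists (xg p0 L j). split.
  - unfold xg. assert (0 <= 2 * PI * INR j / INR L) by (apply Rmult_le_pos; [|left; apply Rinv_0_lt_compat; auto]; apply Rmult_le_pos; [lra| apply pos_INR]).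
    split. unfold p0; lra.
    assert (HjL : INR j + 1 <= INR L) by (rewrite <- S_INR; apply le_INR; lia).
    assert (p0 < 2 * PI / INR L) by (unfold p0; lra).
    assert (p0 * INR L < 2 * PI).
    { replace (2*PI) with (2 * PI / INR L * INR L) by (field; lra). nra. }
    apply (Rmult_lt_reg_r (INR L)); auto.
    replace ((p0 + 2 * PI * INR j / INR L) * INR L) with (p0 * INR L + 2 * PI * INR j) by (field; lra). nra.
  - replace k with (S (k - 1)) at 1 by lia. rewrite sign_var_sum.
    rewrite (rsum_ext _ (fun i => F i j)).
    + rewrite minus_INR in Hf by lia. simpl INR in Hf.
      assert (1 <= INR k) by (apply (le_INR 1 k); lia). lra.
    + intros i _. unfold F. replace (1 + i)%nat with (S i) by lia. replace (S i + 1)%nat with (S (S i)) by lia. reflexivity.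
Qed.
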